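(* Let $K$ be a distance-bound space-filling curve. Then $K$-light-first order is energy-bound. That is, for every constant $\Delta \ge 1$ there is a constant $C$ (depending only on $\Delta$ and $K$) such that for every rooted tree $T$ with $n$ vertices in which every vertex has at most $\Delta$ children, if $T$ is stored in $K$-light-first order, then $$\sum_{v \in T}\ \sum_{c \text{ child of } v} \mathrm{dist}(p_v, p_c) \le C\, n,$$ i.e. the total energy of every vertex sending one message to each of its children is $O(n)$.
   Context: Processors sit on the cells of a two-dimensional grid (large enough to hold the tree). Sending a message from a processor at $(x_1,y_1)$ to one at $(x_2,y_2)$ costs energy equal to the Manhattan distance $|x_1-x_2|+|y_1-y_2|$. A space-filling curve $K$ is an enumeration of the grid cells; the processor at the $i$-th cell of the enumeration is called the $i$-th processor, and $\mathrm{dist}(i,j)$ denotes the energy of sending a message from the $i$-th to the $j$-th processor. $K$ is distance-bound if there is a constant $c$ such that for all natural numbers $i, j$, $\mathrm{dist}(i, i+j) \le c\sqrt{j}$. Light-first order: each vertex $v$ of a rooted tree is stored in one processor, at position $p_v$ along $K$ (the root at the first position). For a vertex $v$ let $s(v)$ denote the number of vertices in the subtree rooted at $v$. A vertex $v$ with children indexed $c_1,\dots,c_d$ so that $s(c_1)\le s(c_2)\le \dots \le s(c_d)$ has its neighborhood in light-first order if each $c_i$ is stored at position $p_v + 1 + \sum_{j=1}^{i-1} s(c_j)$. The tree is stored in $K$-light-first order if every vertex has its neighborhood in light-first order. A light-first order is energy-bound if, for trees of degree bounded by a constant, the total energy of each vertex sending a message to all its children is $O(n)$, $n$ the number of vertices.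 *)

(* Defs.v *)
From Stdlib Require Import Reals.
From mathcomp Require Import all_boot all_order all_algebra all_fingroup.
Set Implicit Arguments. Unset Strict Implicit. Unset Printing Implicit Defensive.

(* Grid cells are points of Z^2 (mathcomp int); a space-filling curve is an
   enumeration K : nat -> int * int of grid cells (injective). *)
Definition curve := nat -> (int * int)%type.

Definition kdist (K : curve) (i j : nat) : nat :=
  (absz ((K i).1 - (K j).1)%R + absz ((K i).2 - (K j).2)%R)%N.

Definition distance_bound (K : curve) : Prop :=
  exists c : Rdefinitions.R, forall i j : nat, Rle (INR (kdist K i (i + j))) (Rmult c (sqrt (INR j))).

Inductive tree := Node of seq tree.
Definition children (t : tree) : seq tree := let: Node cs := t in cs.
Definition leaf := Node [::].

Fixpoint tree_size (t : tree) : nat :=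
  let: Node cs := t in (sumn (map tree_size cs)).+1.

(* Vertices are addressed by paths from the root: [::] is the root and
   rcons a i is the i-th child (in the list order) of vertex a. *)
Fixpoint subt (t : tree) (a : seq nat) : tree :=
  match a with
  | [::] => t
  | i :: a' => subt (nth leaf (children t) i) a'
  end.

Fixpoint valid (t : tree) (a : seq nat) : bool :=
  match a with
  | [::] => true
  | i :: a' => (i < size (children t)) && valid (nth leaf (children t) i) a'
  end.

Definition degree_le (t : tree) (D : nat) : Prop :=
  forall a, valid t a -> size (children (subt t a)) <= D.

Definition light_first (t : tree) (pos : seq nat -> nat) : Prop :=
  pos [::] = 0 /\
  forall a, valid t a ->
    let cs := children (subt t a) in
    exists sigma : {perm 'I_(size cs)},
      (forall i j : 'I_(size cs), i <= j ->
          tree_size (nth leaf cs (sigma i)) <= tree_size (nth leaf cs (sigma j))) /\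
      (forall i : 'I_(size cs),
          pos (rcons a (sigma i)) =
          (pos a + 1 + \sum_(j < size cs | j < i) tree_size (nth leaf cs (sigma j)))%N).

Fixpoint energy_at (K : curve) (pos : seq nat -> nat) (a : seq nat) (t : tree) : nat :=
  let: Node cs := t in
  (fix go (cs : seq tree) (i : nat) : nat :=
     match cs with
     | [::] => 0
     | c :: cs' => kdist K (pos a) (pos (rcons a i)) + energy_at K pos (rcons a i) c
                   + go cs' i.+1
     end) cs 0.

Definition energy (K : curve) (pos : seq nat -> nat) (t : tree) : nat :=
  energy_at K pos [::] t.

(* Main.v *)
Require Import Defs.
From Stdlib Require Import Reals.
From mathcomp Require Import all_boot all_order all_algebra all_fingroup.
From HB Require Import structures.
From Stdlib Require Import Lra Psatz.
Delimit Scope R_scope with Re.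

Section RealLemmas.
Local Open Scope R_scope.
Lemma sqrt_split (Dr u v : R) : (1 <= Dr) -> (0 <= u) -> (0 <= v) ->
  (v*v <= Dr*(u*u)) -> (sqrt (u*u+v*v) <= u + v - v/(2*Dr)).
Proof.
move=> HD Hu Hv Hvu.
set e := (v / (2*Dr)).
have He : (e * (2*Dr) = v) by rewrite /e; field; lra.
have He0 : (0 <= e) by nra.
have Hvd : (v <= Dr * u).
  apply: Rsqr_incr_0_var; last nra. rewrite /Rsqr. nra.
have Hev : (e <= v/2) by nra.
have Heu : (2 * e <= u) by nra.
have Hr : (0 <= u + v - e) by nra.
rewrite -[X in (_ <= X)](sqrt_square _ Hr).
apply: sqrt_le_1; first nra; first nra.
nra.
Qed.

Lemma sqrt_sub (a b : R) : 0 <= a -> 0 <= b -> sqrt (a + b) <= sqrt a + sqrt b.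
Proof.
move=> Ha Hb.
have Hsa := sqrt_pos a; have Hsb := sqrt_pos b.
have Hr : 0 <= sqrt a + sqrt b by lra.
rewrite -[X in (_ <= X)](sqrt_square _ Hr).
apply: sqrt_le_1; try nra.
have := sqrt_sqrt a Ha; have := sqrt_sqrt b Hb. nra.
Qed.

Lemma node_ineq (Dr c d L M SS : R) : 1 <= Dr -> 0 <= c -> 0 <= d <= Dr ->
  0 <= L <= Dr * M -> 1 <= M -> sqrt M + sqrt L <= SS ->
  d * (c * sqrt (1 + L)) + c * ((Dr + 2*Dr*Dr) * (L + M) - 2*Dr*Dr * SS)
  <= c * ((Dr + 2*Dr*Dr) * (1 + (L + M)) - 2*Dr*Dr * sqrt (1 + (L + M))).
Proof.
move=> HD Hc Hd HL HM HSS.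
have sM := sqrt_pos M; have sL := sqrt_pos L.
have eM := sqrt_sqrt M ltac:(lra); have eL := sqrt_sqrt L ltac:(lra).
have h1 : sqrt (1 + L) <= 1 + sqrt L by have := sqrt_sub 1 L; rewrite sqrt_1; apply; lra.
have h2 : sqrt (1 + (L + M)) <= 1 + sqrt (M + L).
  by have := sqrt_sub 1 (M + L); rewrite sqrt_1 (Rplus_comm M); apply; lra.
have h3 : sqrt (M + L) <= sqrt M + sqrt L - sqrt L / (2 * Dr).
  rewrite -{1}eM -{1}eL; apply: sqrt_split; try lra. nra.
have h4 : 2*Dr*Dr * (sqrt L / (2 * Dr)) = Dr * sqrt L by field; lra.
have hB : 0 <= 2*Dr*Dr by nra.
suff H : d * sqrt (1 + L) - 2*Dr*Dr * SS <= (Dr + 2*Dr*Dr) - 2*Dr*Dr * sqrt (1 + (L + M)).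
  have := Rmult_le_compat_l c _ _ Hc H. lra.
have : d * sqrt (1 + L) <= Dr * (1 + sqrt L).
  have : d * sqrt (1 + L) <= d * (1 + sqrt L) by apply: Rmult_le_compat_l; lra.
  have : d * (1 + sqrt L) <= Dr * (1 + sqrt L) by apply: Rmult_le_compat_r; lra.
  lra.
have := Rmult_le_compat_l _ _ _ hB HSS.
have := Rmult_le_compat_l _ _ _ hB (Rle_trans _ _ _ h2 (Rplus_le_compat_l 1 _ _ h3)).
lra.
Qed.

End RealLemmas.

HB.instance Definition _ := Monoid.isComLaw.Build R 0%Re Rplus
  (fun x y z => esym (Rplus_assoc x y z)) Rplus_comm Rplus_0_l.

Lemma INR_addn m n : INR (m + n) = (INR m + INR n)%Re.
Proof. exact: plus_INR. Qed.

Lemma INR_sum (I : Type) (r : seq I) (P : pred I) (F : I -> nat) :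
  INR (\sum_(i <- r | P i) F i) = \big[Rplus/0%Re]_(i <- r | P i) INR (F i).
Proof. by apply: (big_morph INR INR_addn). Qed.

Lemma Rsum_const n (x : R) : \big[Rplus/0%Re]_(i < n) x = (INR n * x)%Re.
Proof.
rewrite big_const_ord; elim: n => [|n IH]; first by rewrite Rmult_0_l.
by rewrite iterS IH S_INR; ring.
Qed.

Lemma Rsum_le (I : Type) (r : seq I) (P : pred I) (F G : I -> R) :
  (forall i, P i -> (F i <= G i)%Re) ->
  (\big[Rplus/0%Re]_(i <- r | P i) F i <= \big[Rplus/0%Re]_(i <- r | P i) G i)%Re.
Proof.
move=> H; apply: (big_ind2 (fun u v => (u <= v)%Re)) => //; first exact: Rle_refl.
by move=> *; apply: Rplus_le_compat.
Qed.

Lemma Rsum_scale (I : Type) (r : seq I) (P : pred I) (F : I -> R) a :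
  \big[Rplus/0%Re]_(i <- r | P i) (a * F i)%Re = (a * \big[Rplus/0%Re]_(i <- r | P i) F i)%Re.
Proof.
rewrite (big_morph (fun x => a * x)%Re (id1 := 0%Re) (op1 := Rplus) (fun x y => Rmult_plus_distr_l a x y)) //.
by rewrite Rmult_0_r.
Qed.

Lemma Rsum_sqrt (I : Type) (r : seq I) (P : pred I) (F : I -> nat) :
  (sqrt (INR (\sum_(i <- r | P i) F i)) <= \big[Rplus/0%Re]_(i <- r | P i) sqrt (INR (F i)))%Re.
Proof.
rewrite INR_sum.
suff : (0 <= \big[Rplus/0%Re]_(i <- r | P i) INR (F i))%Re /\
   (sqrt (\big[Rplus/0%Re]_(i <- r | P i) INR (F i)) <= \big[Rplus/0%Re]_(i <- r | P i) sqrt (INR (F i)))%Re by case.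
apply: (big_ind2 (fun u v => 0 <= u /\ sqrt u <= v)%Re).
- by rewrite sqrt_0; split; apply: Rle_refl.
- move=> u1 v1 u2 v2 [h1 h2] [h3 h4]; split; first lra.
  have := sqrt_sub u1 u2 h1 h3; move=> HH; exact: (Rle_trans _ _ _ HH (Rplus_le_compat _ _ _ _ h2 h4)).
- move=> i _; split; first exact: pos_INR. exact: Rle_refl.
Qed.

Section Go2.
Variables (K : curve) (pos : seq nat -> nat) (a : seq nat).
Fixpoint go2 (cs : seq tree) (i : nat) : nat :=
  match cs with
  | [::] => 0
  | c :: cs' => kdist K (pos a) (pos (rcons a i)) + energy_at K pos (rcons a i) c + go2 cs' i.+1
  end.
End Go2.

Lemma energy_node K pos a cs : energy_at K pos a (Node cs) = go2 K pos a cs 0.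
Proof. by []. Qed.

Lemma go2_sum K pos a cs i0 : go2 K pos a cs i0 =
  \sum_(i < size cs) (kdist K (pos a) (pos (rcons a (i0 + i))) + energy_at K pos (rcons a (i0 + i)) (nth leaf cs i)).
Proof.
elim: cs i0 => [|c cs IH] i0 /=; first by rewrite big_ord0.
by rewrite big_ord_recl /= IH addn0; congr (_ + _); apply: eq_bigr => i _; rewrite addnS.
Qed.

Lemma energy_sum K pos a cs : energy_at K pos a (Node cs) =
  \sum_(i < size cs) (kdist K (pos a) (pos (rcons a i)) + energy_at K pos (rcons a i) (nth leaf cs i)).
Proof. by rewrite energy_node go2_sum. Qed.

Lemma sumn_sizes cs : sumn (map tree_size cs) = \sum_(i < size cs) tree_size (nth leaf cs i).
Proof.
elim: cs => [|c cs IH] /=; first by rewrite big_ord0.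
by rewrite big_ord_recl /= IH.
Qed.

Lemma tree_size_pos t : 0 < tree_size t.
Proof. by case: t. Qed.

Definition good (D : nat) (pos : seq nat -> nat) (a : seq nat) (t : tree) : Prop :=
  size (children t) <= D /\
  (let cs := children t in
    exists sigma : {perm 'I_(size cs)},
      (forall i j : 'I_(size cs), i <= j ->
          tree_size (nth leaf cs (sigma i)) <= tree_size (nth leaf cs (sigma j))) /\
      (forall i : 'I_(size cs),
          pos (rcons a (sigma i)) =
          (pos a + 1 + \sum_(j < size cs | j < i) tree_size (nth leaf cs (sigma j)))%N)).

Lemma main_ind (K : curve) (pos : seq nat -> nat) (D : nat) (c : R) :
  (1 <= D)%N -> (0 <= c)%Re ->
  (forall i j, (INR (kdist K i (i + j)) <= c * sqrt (INR j))%Re) ->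
  forall n t a, tree_size t <= n ->
  (forall b, valid t b -> good D pos (a ++ b) (subt t b)) ->
  (INR (energy_at K pos a t) <= c * ((INR D + 2*INR D*INR D) * INR (tree_size t)
       - 2*INR D*INR D * sqrt (INR (tree_size t))))%Re.
Proof.
move=> HD Hc HK n; elim: n => [|n IH] t a.
  by rewrite leqn0 (gtn_eqF (tree_size_pos t)).
have Dr1 : (1 <= INR D)%Re by apply: (le_INR 1); apply/leP.
case: t => [[|c0 cs']] Hsz Hgood.
  rewrite /= sqrt_1; nra.
set cs := c0 :: cs'.
have [Hdeg [sigma [Hsort Hpos]]] := Hgood [::] isT.
rewrite cats0 in Hpos.
pose lst : 'I_(size cs) := ord_max.
pose x (i : nat) := tree_size (nth leaf cs i).
pose M := x (sigma lst).
pose L := \sum_(j < size cs | j != lst) x (sigma j).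
have Htot : \sum_(j < size cs) x (sigma j) = M + L by rewrite (bigD1 lst).
have HxM : forall i : 'I_(size cs), x i <= M.
  move=> i; rewrite /M -{1}(permKV sigma i); apply: Hsort.
  by rewrite /lst /= -ltnS; apply: ltn_ord.
have HLM : L <= D * M.
  rewrite /L big_mkcond; apply: (@leq_trans (\sum_(j < size cs) M)).
    by apply: leq_sum => j _; case: ifP => // _; apply: HxM.
  by rewrite big_const_ord iter_addn_0 mulnC leq_mul2r Hdeg orbT.
have HS : forall j : 'I_(size cs), \sum_(k < size cs | k < j) x (sigma k) <= L.
  move=> j; rewrite /L [X in _ <= X]big_mkcond [X in X <= _]big_mkcond; apply: leq_sum => k _.
  case: ifP => // hk; rewrite ifT //; apply/negP => /eqP hkl.
  by move: hk; rewrite hkl /= ltnNge -ltnS ltn_ord.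
have Hts : tree_size (Node cs) = (M + L).+1.
  have -> : tree_size (Node cs) = (sumn (map tree_size cs)).+1 by [].
  by rewrite sumn_sizes -Htot (reindex_inj (@perm_inj _ sigma)).
set Dr := INR D.
set P := (c * sqrt (1 + INR L))%Re.
set cA := (c * (Dr + 2 * Dr * Dr))%Re.
set cB := (c * (2 * Dr * Dr))%Re.
rewrite energy_sum (reindex_inj (@perm_inj _ sigma)) INR_sum.
apply: (Rle_trans _ _ _ (@Rsum_le _ _ _ _
   (fun j : 'I_(size cs) => P + (cA * INR (x (sigma j)) + (- cB) * sqrt (INR (x (sigma j)))))%Re _)).
  move=> j _; rewrite INR_addn; apply: Rplus_le_compat.
    rewrite Hpos -addnA; apply: Rle_trans (HK _ _) _.
    apply: Rmult_le_compat_l Hc _; apply: sqrt_le_1_alt.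
    rewrite INR_addn; change (INR 1) with 1%Re; apply: Rplus_le_compat_l.
    by apply: le_INR; apply/leP; apply: HS.
  have Hx : (x (sigma j) <= n)%N.
    have h : x (sigma j) < tree_size (Node cs).
      by rewrite Hts ltnS (leq_trans (HxM _) (leq_addr _ _)).
    by rewrite -ltnS; apply: leq_trans h Hsz.
  have := IH (nth leaf cs (sigma j)) (rcons a (sigma j)) Hx.
  have Hg : forall b, valid (nth leaf cs (sigma j)) b ->
      good D pos (rcons a (sigma j) ++ b) (subt (nth leaf cs (sigma j)) b).
    move=> b Hb; rewrite cat_rcons.
    refine (Hgood ((sigma j : nat) :: b) _); by rewrite /= Hb andbT ltn_ord.
  move=> /(_ Hg) h; rewrite /cA /cB /Dr /x; apply: (Rle_trans _ _ _ h); apply: Req_le; ring.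
rewrite Hts S_INR big_split /= big_split /= Rsum_const !Rsum_scale -INR_sum Htot.
set SS := \big[Rplus/0%Re]_(i < size cs) sqrt (INR (x (sigma i))).
have HSS : (sqrt (INR M) + sqrt (INR L) <= SS)%Re.
  rewrite /SS (bigD1 lst) //=; apply: Rplus_le_compat_l; exact: Rsum_sqrt.
have HM1 : (1 <= INR M)%Re by apply: (le_INR 1); apply/leP; apply: tree_size_pos.
have HLM' : (0 <= INR L <= Dr * INR M)%Re.
  split; first exact: pos_INR.
  rewrite /Dr -mult_INR; apply: le_INR; apply/leP; exact: HLM.
have Hd : (0 <= INR (size cs) <= Dr)%Re.
  split; first exact: pos_INR.
  by apply: le_INR; apply/leP.
have := node_ineq Dr c (INR (size cs)) (INR L) (INR M) SS Dr1 Hc Hd HLM' HM1 HSS.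
rewrite INR_addn /P /cA /cB.
clear P cA cB.
have -> : (INR M + INR L + 1 = 1 + (INR L + INR M))%Re by ring.
change (INR (size cs').+1) with (INR (size cs)).
move=> h; eapply Rle_trans; [eapply Rle_trans; [apply Req_le | exact h] | apply Req_le]; ring.
Qed.

Theorem mainTheorem1 (K : curve) (Kinj : injective K) (HK : distance_bound K) :
  forall D : nat, (1 <= D)%N ->
  exists C : Rdefinitions.R,
    forall (t : tree) (pos : seq nat -> nat),
      degree_le t D -> light_first t pos ->
      Rle (INR (energy K pos t)) (Rmult C (INR (tree_size t))).
Proof.
move=> D HD1.
case: HK => c Hc.
have c0 : (0 <= c)%Re.
  have := Hc 0%N 1%N; change (INR 1) with 1%Re; rewrite sqrt_1 Rmult_1_r.
  have := pos_INR (kdist K 0 (0 + 1)); lra.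
exists (c * (INR D + 2 * INR D * INR D))%Re.
move=> t pos Hdeg [Hroot Hlf].
have := main_ind K pos D c HD1 c0 Hc (tree_size t) t [::] (leqnn (tree_size t))
  (fun b Hb => conj (Hdeg b Hb) (Hlf b Hb)).
rewrite /energy.
have := sqrt_pos (INR (tree_size t)).
have : (0 <= c * (2 * INR D * INR D))%Re.
  apply: Rmult_le_pos c0 _; have := (le_INR 1 D (elimTF leP HD1)); change (INR 1) with 1%Re; nra.
move: (sqrt (INR (tree_size t))) (INR (tree_size t)) (INR (energy_at K pos [::] t)) => s n e.
nra.
Qed.
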